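(* Fix a positive integer $m$. Then the rate $\frac{\log_2|C_{n,m}|}{\binom{n}{2}}$ of the community code $C_{n,m}$ tends to $0$ as $n\to\infty$.
   Context: For integers $n\geq 2$, $N=\binom{n}{2}$ and $1\leq m\leq n$, the community code $C_{n,m}\subseteq\mathbb{F}_2^N$ consists of exactly those binary vectors of length $N$ that are the upper-triangular (off-diagonal) part of the adjacency matrix of a simple undirected graph on the labeled vertex set $\{1,\ldots,n\}$ which is a disjoint union of cliques, each clique having at least $m$ vertices. The rate of $C_{n,m}$ is $\log_2|C_{n,m}|/N$. *)

(* Defs.v *)
From Stdlib Require Import Reals.
From mathcomp Require Import all_boot.
Set Implicit Arguments. Unset Strict Implicit. Unset Printing Implicit Defensive.

(* Coordinates of F_2^N, N = 'C(n,2): unordered pairs {i,j}, i<j, of vertices 'I_n. *)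
Definition upair (n : nat) := {x : 'I_n * 'I_n | x.1 < x.2}.

Definition adjmx (n : nat) := {ffun 'I_n * 'I_n -> bool}.

Definition simple_adj n (A : adjmx n) : bool :=
  [forall i, ~~ A (i, i)] && [forall i, forall j, A (i, j) == A (j, i)].

Definition community_adj n (m : nat) (A : adjmx n) : bool :=
  [exists P : {set {set 'I_n}},
    [&& partition P [set: 'I_n],
        [forall B in P, m <= #|B|] &
        [forall i, forall j, (i != j) ==> (A (i, j) == (pblock P i == pblock P j))]]].

Definition upper n (A : adjmx n) : {ffun upair n -> bool} :=
  [ffun p : upair n => A (val p)].

Definition community_code (n m : nat) : {set {ffun upair n -> bool}} :=
  [set v | [exists A : adjmx n,
              [&& simple_adj A, community_adj m A & v == upper A]]].

Definition rate (n m : nat) : R :=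
  (ln (INR #|community_code n m|) / ln 2) / INR 'C(n, 2).

(* Main.v *)
Require Import Defs.
From Stdlib Require Import Reals Lra Lia.
From mathcomp Require Import all_boot zify.

Lemma bin2_mul n : (2 * 'C(n, 2) = n * (n - 1))%N.
Proof.
elim: n => [//|n IH]; rewrite binS bin1 mulnDr IH; case: n {IH} => [|n] //=; nia.
Qed.

Lemma card_cc n m : #|community_code n m| <= n ^ n.
Proof.
pose f (g : {ffun 'I_n -> 'I_n}) : {ffun upair n -> bool} :=
  [ffun p : upair n => g (val p).1 == g (val p).2].
apply: (leq_trans (subset_leq_card (_ : community_code n m \subset [set f x | x in setT]))).
  apply/subsetP => v; rewrite inE => /existsP [A /and3P [_ /existsP [P /and3P [Pp _ HA]] /eqP ->]].
  case/and3P: Pp => /eqP covP tP _.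
  pose g := [ffun i => odflt i [pick j in pblock P i]].
  have gin : forall i, g i \in pblock P i.
    move=> i; rewrite ffunE; case: pickP => [j //|].
    by move=> /(_ i); rewrite mem_pblock covP inE.
  have gb : forall i, pblock P (g i) = pblock P i by move=> i; apply: same_pblock.
  apply/imsetP; exists g; first by rewrite inE.
  apply/ffunP => -[[i j] /= lt]; rewrite !ffunE /=.
  have ij : i != j by rewrite neq_ltn lt.
  rewrite (eqP (implyP (forallP (forallP HA i) j) ij)).
  apply/eqP/eqP => [e|e].
    rewrite e; case: pickP => [//|/(_ j)].
    by rewrite mem_pblock covP inE.
  by rewrite -(gb i) -(gb j) !ffunE e.
by rewrite (leq_trans (leq_imset_card _ _)) // cardsT card_ffun !card_ord.
Qed.

Local Open Scope R_scope.

Lemma expn_pow a k : (a ^ k)%N = Nat.pow a k.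
Proof. by elim: k => //= k IH; rewrite expnS IH. Qed.

Lemma ln0 : ln 0 = 0.
Proof. by unfold ln; case: (Rlt_dec 0 0) => // h; case: (Rlt_irrefl _ h). Qed.

Lemma ln_nat_ge0 k : 0 <= ln (INR k).
Proof.
case: k => [|k].
  rewrite (_ : INR 0 = 0) //; unfold ln; case: (Rlt_dec 0 0) => [h|_]; [by case: (Rlt_irrefl _ h)|exact: Rle_refl].
have h : 1 <= INR k.+1 by rewrite S_INR; have := pos_INR k; lra.
case: (Rle_lt_or_eq_dec _ _ h) => [h1|<-]; last by rewrite ln_1; lra.
by have := ln_increasing 1 _ Rlt_0_1 h1; rewrite ln_1; lra.
Qed.

Lemma ln_le_mono x y : 0 < x -> x <= y -> ln x <= ln y.
Proof.
move=> hx hxy; case: (Rle_lt_or_eq_dec _ _ hxy) => [h|<-]; last lra.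
by have := ln_increasing _ _ hx h; lra.
Qed.

Lemma ln_lt_2sqrt x : 0 < x -> ln x < 2 * sqrt x.
Proof.
move=> hx.
have hs : 0 < sqrt x by apply: sqrt_lt_R0.
have e : x = sqrt x * sqrt x by rewrite sqrt_sqrt //; lra.
rewrite {1}e ln_mult //.
have : ln (sqrt x) < sqrt x.
  rewrite -{2}(ln_exp (sqrt x)); apply: ln_increasing => //.
  have := exp_ineq1 (sqrt x); lra.
lra.
Qed.

Lemma rate_bound n m : (2 <= n)%N ->
  0 <= rate n m <= 8 / (ln 2 * sqrt (INR n)).
Proof.
move=> hn.
have l2 : 0 < ln 2 by have := ln_lt_2; lra.
have hnR : 2 <= INR n by apply: (le_INR 2); apply/leP.
have hC : INR 'C(n, 2) = INR n * (INR n - 1) / 2.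
  have := f_equal INR (bin2_mul n); rewrite !mult_INR minus_INR; last by apply/leP; lia.
  simpl INR; move=> h; lra.
set c := #|community_code n m|.
have hc : (c <= n ^ n)%N by apply: card_cc.
have hlc0 := ln_nat_ge0 c.
have hlc : ln (INR c) <= INR n * ln (INR n).
  case: (posnP c) => [->|cpos].
    rewrite (_ : INR 0 = 0) // ln0.
    have := ln_nat_ge0 n; have := pos_INR n; nra.
  rewrite -ln_pow; last lra.
  apply: ln_le_mono; first by apply: lt_0_INR; apply/ltP.
  by rewrite -pow_INR -expn_pow; apply: le_INR; apply/leP.
have hs : 0 < sqrt (INR n) by apply: sqrt_lt_R0; lra.
have hsq : sqrt (INR n) * sqrt (INR n) = INR n by rewrite sqrt_sqrt //; lra.
have hln := ln_lt_2sqrt (INR n) ltac:(lra).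
rewrite /rate hC -/c; split.
  apply: Rmult_le_pos; last by apply: Rlt_le; apply: Rinv_0_lt_compat; nra.
  by apply: Rmult_le_pos => //; apply: Rlt_le; apply: Rinv_0_lt_compat.
set N := INR n in hnR hs hsq hln hlc *; set L := ln (INR c) in hlc0 hlc *.
set s := sqrt N in hs hsq hln *.
have hden : 0 < N * (N - 1) / 2 by nra.
apply: (Rmult_le_reg_r (N * (N - 1) / 2)) => //.
rewrite Rmult_assoc Rinv_l; last lra.
apply: (Rmult_le_reg_r (ln 2)) => //.
have e0 : L / ln 2 * 1 * ln 2 = L by field; lra.
rewrite e0.
have e1 : 8 / (ln 2 * s) * (N * (N - 1) / 2) * ln 2 = 4 * s * (N - 1).
  rewrite -hsq; field; split; lra.
rewrite e1.
(* L <= N ln N < 2 N s ; need <= 4 s (N-1), i.e. N <= 2(N-1) *)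
nra.
Qed.

Theorem lemma5 (m : nat) (hm : (0 < m)%N) : Un_cv (fun n => rate n m) R0.
Proof.
move=> eps heps.
have l2 : 0 < ln 2 by have := ln_lt_2; lra.
set K := 8 / (ln 2 * eps).
have hK : 0 < K by apply: Rdiv_lt_0_compat; [lra|nra].
have eK : eps * ln 2 * K = 8 by rewrite /K; field; lra.
have [N hN] := INR_unbounded (K * K).
exists (maxn N 2) => n /leP hn.
move: hn; rewrite geq_max => /andP [hNn h2n].
have [h0 h1] := rate_bound n m h2n.
rewrite /R_dist Rminus_0_r Rabs_pos_eq //.
apply: Rle_lt_trans h1 _.
have hNn' : INR N <= INR n by apply: le_INR; apply/leP.
have hs : K < sqrt (INR n).
  rewrite -(sqrt_square K); last lra.
  apply: sqrt_lt_1; nra.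
have hsp : 0 < sqrt (INR n) by lra.
apply: (Rmult_lt_reg_r (ln 2 * sqrt (INR n))); first nra.
rewrite (_ : 8 / (ln 2 * sqrt (INR n)) * (ln 2 * sqrt (INR n)) = 8); last by field; lra.
nra.
Qed.
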